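(* Let $G$ be a looped simple graph and $\nu$ a positive integer. Then $G$ has a transverse matroid of nullity $\nu$ if and only if some looped simple graph locally equivalent to $G$ has a stable set of size $\nu$.
   Context: A looped simple graph is a finite graph in which each vertex carries at most one loop and no two distinct vertices are joined by more than one edge. ''Adjacent''/''neighbors'' refer only to distinct vertices joined by a non-loop edge; a stable set is a set of vertices no two of which are adjacent. $A(G)$ is the $V(G)\times V(G)$ matrix over $GF(2)$ with diagonal entry $1$ exactly at looped vertices and off-diagonal entry $1$ exactly for adjacent pairs. $IAS(G)=(I\mid A(G)\mid A(G)+I)$ over $GF(2)$, rows indexed by $V(G)$; for $v\in V(G)$ the $v$-columns of the three blocks are labelled $\phi_G(v),\chi_G(v),\psi_G(v)$. The isotropic matroid $M[IAS(G)]$ is the binary column matroid of $IAS(G)$ on $W(G)=\{\phi_G(v),\chi_G(v),\psi_G(v):v\in V(G)\}$. The vertex triple of $v$ is $\tau_G(v)=\{\phi_G(v),\chi_G(v),\psi_G(v)\}$. A transversal is a subset of $W(G)$ meeting each vertex triple in exactly one element; a transverse matroid of $G$ is the restriction of $M[IAS(G)]$ to a transversal. The nullity of a matroid is the size of its ground set minus its rank. Local equivalence: $G_\ell^v$ is obtained from $G$ by complementing the loop status of $v$; $G_s^v$ by complementing the adjacency status of every pair of distinct neighbors of $v$; $G_{ns}^v$ by doing this and also complementing the loop status of every neighbor of $v$. $H$ is locally equivalent to $G$ if $H$ is obtained from $G$ by a finite sequence of such operations. *)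

(* Defs.v *)
From HB Require Import structures.
From mathcomp Require Import all_boot all_order all_algebra.
Set Implicit Arguments. Unset Strict Implicit. Unset Printing Implicit Defensive.
Import GRing.Theory.
Local Open Scope ring_scope.

Record lgraph (V : finType) := LGraph { ladj : rel V; lloop : pred V }.

Definition lsimple (V : finType) (G : lgraph V) : Prop :=
  (forall x y, ladj G x y = ladj G y x) /\ (forall x, ladj G x x = false).

Definition stable (V : finType) (G : lgraph V) (S : {set V}) : Prop :=
  forall x y, x \in S -> y \in S -> ladj G x y = false.

Definition loc_l (V : finType) (v : V) (G : lgraph V) : lgraph V :=
  LGraph (ladj G) (fun x => if x == v then ~~ lloop G x else lloop G x).

Definition loc_s (V : finType) (v : V) (G : lgraph V) : lgraph V :=
  LGraph (fun x y => ladj G x y (+) [&& x != y, ladj G v x & ladj G v y])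
         (lloop G).

Definition loc_ns (V : finType) (v : V) (G : lgraph V) : lgraph V :=
  LGraph (fun x y => ladj G x y (+) [&& x != y, ladj G v x & ladj G v y])
         (fun x => lloop G x (+) ladj G v x).

Inductive loc_equiv (V : finType) (G : lgraph V) : lgraph V -> Prop :=
  | loc_refl : loc_equiv G G
  | loc_step_l v H : loc_equiv G H -> loc_equiv G (loc_l v H)
  | loc_step_s v H : loc_equiv G H -> loc_equiv G (loc_s v H)
  | loc_step_ns v H : loc_equiv G H -> loc_equiv G (loc_ns v H).

Definition adjmx (V : finType) (G : lgraph V) : 'M['F_2]_#|V| :=
  \matrix_(i, j) (let x := enum_val i in let y := enum_val j in
                  if x == y then (lloop G x)%:R else (ladj G x y)%:R).

Definition IAS (V : finType) (G : lgraph V) :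
  'M['F_2]_(#|V|, #|V| + (#|V| + #|V|)) :=
  row_mx 1%:M (row_mx (adjmx G) (adjmx G + 1%:M)).

(* ground set W(G): column indices of IAS(G) *)
Definition W (V : finType) := 'I_(#|V| + (#|V| + #|V|)).

Definition phiG (V : finType) (v : V) : W V := lshift _ (enum_rank v).
Definition chiG (V : finType) (v : V) : W V := rshift _ (lshift _ (enum_rank v)).
Definition psiG (V : finType) (v : V) : W V := rshift _ (rshift _ (enum_rank v)).

Definition vtriple (V : finType) (v : V) : {set W V} := [set phiG v; chiG v; psiG v].

Definition transversal (V : finType) (T : {set W V}) : Prop :=
  forall v : V, #|T :&: vtriple v| = 1%N.

Definition colrank (m p : nat) (M : 'M['F_2]_(m, p)) (S : {set 'I_p}) : nat :=
  \rank (colsub (fun i : 'I_#|S| => enum_val i) M).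

Definition restr_nullity (V : finType) (G : lgraph V) (T : {set W V}) : nat :=
  (#|T| - colrank (IAS G) T)%N.

Definition has_transverse_nullity (V : finType) (G : lgraph V) (nu : nat) : Prop :=
  exists T : {set W V}, transversal T /\ restr_nullity G T = nu.

(* Main.v *)
Require Import Defs.
From HB Require Import structures.
From mathcomp Require Import all_boot all_order all_algebra.
Set Implicit Arguments. Unset Strict Implicit. Unset Printing Implicit Defensive.
From mathcomp Require Import zify.
Import GRing.Theory.
Local Open Scope ring_scope.

Lemma F2_two : (1 + 1 : 'F_2) = 0.
Proof. exact: (pcharf0 (pchar_Fp (isT : prime 2))). Qed.
Lemma F2_add (a b : bool) : (a%:R + b%:R : 'F_2) = (a (+) b)%:R.
Proof. by case: a; case: b => //=; rewrite ?addr0 ?add0r ?F2_two. Qed.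
Lemma F2_mul (a b : bool) : (a%:R * b%:R : 'F_2) = (a && b)%:R.
Proof. by case: a; case: b => //=; rewrite ?mulr0 ?mul0r ?mulr1. Qed.

Section Main.
Variable V : finType.
Local Notation n := #|V|.

Definition k0 : 'I_3 := @Ordinal 3 0 isT.
Definition k1 : 'I_3 := @Ordinal 3 1 isT.
Definition k2 : 'I_3 := @Ordinal 3 2 isT.

Definition eb (G : lgraph V) (k : 'I_3) (x y : V) : bool :=
  match val k with
  | 0 => y == x
  | 1 => if y == x then lloop G x else ladj G y x
  | _ => if y == x then ~~ lloop G x else ladj G y x
  end.

Definition rv G k x : 'rV['F_2]_n := \row_j (eb G k x (enum_val j))%:R.
Definition Rm G (c : V -> 'I_3) : 'M['F_2]_n :=
  \matrix_(i, j) (eb G (c (enum_val i)) (enum_val i) (enum_val j))%:R.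
Definition nul G c := (n - \rank (Rm G c))%N.

Definition mk (k : 'I_3) (x : V) : W V :=
  match val k with 0 => phiG x | 1 => chiG x | _ => psiG x end.

Lemma row_Rm G c i : row i (Rm G c) = rv G (c (enum_val i)) (enum_val i).
Proof. by apply/rowP => j; rewrite !mxE. Qed.

Lemma split_l m p (i : 'I_m) : split (lshift p i) = inl i.
Proof. exact: (unsplitK (inl i)). Qed.
Lemma split_r m p (i : 'I_p) : split (rshift m i) = inr i.
Proof. exact: (unsplitK (inr i)). Qed.

Lemma IAS_phi (G : lgraph V) (j : 'I_n) (x : V) : IAS G j (phiG x) = (enum_val j == x)%:R.
Proof. by rewrite /IAS /phiG row_mxEl mxE -(inj_eq enum_val_inj) enum_rankK. Qed.
Lemma IAS_chi (G : lgraph V) (j : 'I_n) (x : V) : IAS G j (chiG x) =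
   (if enum_val j == x then lloop G x else ladj G (enum_val j) x)%:R.
Proof. by rewrite /IAS /chiG row_mxEr row_mxEl mxE enum_rankK /=; case: eqP => [->|]. Qed.
Lemma IAS_psi (G : lgraph V) (j : 'I_n) (x : V) : IAS G j (psiG x) =
   (if enum_val j == x then ~~ lloop G x else ladj G (enum_val j) x)%:R.
Proof.
rewrite /IAS /psiG row_mxEr row_mxEr !mxE enum_rankK -(inj_eq enum_val_inj) enum_rankK /=.
case: eqP => [->|] /=; last by rewrite addr0.
by case: (lloop G x); rewrite /= ?add0r ?F2_two.
Qed.

Lemma row_IAS G k x : row (mk k x) (IAS G)^T = rv G k x.
Proof.
apply/rowP => j; rewrite [LHS]mxE [LHS]mxE [RHS]mxE.
case: k => [[|[|[|//]]] Hk]; [exact: IAS_phi | exact: IAS_chi | exact: IAS_psi].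
Qed.

Lemma mk_val k x : val (mk k x) = (k * n + enum_rank x)%N.
Proof.
case: k => [[|[|[|//]]] Hk]; rewrite /mk /=; first by [].
  by rewrite mul1n.
by rewrite mul2n -addnn addnA.
Qed.

Lemma arith3 (a b c d m : nat) : (a < 3)%N -> (b < 3)%N -> (c < m)%N -> (d < m)%N ->
  (a * m + c = b * m + d)%N -> a = b /\ c = d.
Proof.
case: a => [|[|[|a]]] //; case: b => [|[|[|b]]] //= _ _; lia.
Qed.

Lemma mk_inj k x k' y : mk k x = mk k' y -> k = k' /\ x = y.
Proof.
move=> /(f_equal val); rewrite !mk_val => E.
have [H1 H2] := arith3 (ltn_ord k) (ltn_ord k') (ltn_ord (enum_rank x)) (ltn_ord (enum_rank y)) E.
by split; [apply: val_inj | apply: enum_rank_inj; apply: val_inj].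
Qed.

Lemma mk_surj (w : W V) : exists k x, w = mk k x.
Proof.
case: (splitP w) => [i Hi | j Hj].
  exists k0, (enum_val i); apply: val_inj; rewrite mk_val enum_valK mul0n //.
case: (splitP j) => [i Hi | i Hi].
  exists k1, (enum_val i); apply: val_inj; rewrite [val w]/= mk_val enum_valK mul1n Hj Hi //.
exists k2, (enum_val i); apply: val_inj; rewrite [val w]/= mk_val enum_valK mul2n -addnn -addnA Hj Hi //.
Qed.

End Main.


Section S0.
Variable V : finType.
Definition sw (a b k : 'I_3) : 'I_3 := if k == a then b else if k == b then a else k.
Definition pl (u x : V) (k : 'I_3) := if x == u then sw k1 k2 k else k.
Definition pns (G : lgraph V) (u x : V) (k : 'I_3) :=
  if x == u then (if lloop G u then sw k0 k1 k else sw k0 k2 k) else k.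
Definition ps (G : lgraph V) (u x : V) (k : 'I_3) :=
  if x == u then (if lloop G u then sw k0 k1 k else sw k0 k2 k)
  else if ladj G u x then sw k1 k2 k else k.

Ltac brute Hsym Hirr :=
  repeat (simpl; match goal with
  | H : ?a <> ?a |- _ => by case: H
  | |- context[?a == ?a] => rewrite eqxx
  | |- context[?a == ?b] => is_var a; is_var b; case: (@eqP _ a b) => [?|?]; subst
  end);
  rewrite ?Hirr;
  repeat match goal with
  | |- context[ladj ?G ?a ?b] => let E := fresh in have E := Hsym a b; move: E;
      case: (ladj G a b); case: (ladj G b a) => // _
  | |- context[lloop ?G ?a] => case: (lloop G a)
  end.

Lemma eb_ns (G : lgraph V) u (Hs : lsimple G) k x y :
  eb (loc_ns u G) (pns G u x k) x y = eb G k x y (+) (eb G k x u && ladj G u y).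
Proof.
case: Hs => Hsym Hirr.
case: k => [[|[|[|//]]] Hk]; rewrite /eb /pns /loc_ns /sw /k0 /k1 /k2 /=; brute Hsym Hirr.
all: by [].
Qed.

Lemma eb_s (G : lgraph V) u (Hs : lsimple G) k x y :
  eb (loc_s u G) (ps G u x k) x y = eb G k x y (+) (eb G k x u && ladj G u y).
Proof.
case: Hs => Hsym Hirr.
case: k => [[|[|[|//]]] Hk]; rewrite /eb /ps /loc_s /sw /k0 /k1 /k2 /=; brute Hsym Hirr.
all: by [].
Qed.

Lemma eb_l (G : lgraph V) u (Hs : lsimple G) k x y :
  eb (loc_l u G) (pl u x k) x y = eb G k x y.
Proof.
case: Hs => Hsym Hirr.
case: k => [[|[|[|//]]] Hk]; rewrite /eb /pl /loc_l /sw /k0 /k1 /k2 /=; brute Hsym Hirr.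
all: by [].
Qed.
End S0.


Section S1.
Variable V : finType.
Local Notation n := #|V|.

Lemma sum_delta (F : 'I_n -> 'F_2) j : \sum_i F i * (i == j)%:R = F j.
Proof.
rewrite (bigD1 j) //= eqxx mulr1 big1 ?addr0 // => i /negbTE ->; by rewrite mulr0.
Qed.

Definition Qm (G : lgraph V) (u : V) : 'M['F_2]_n :=
  \matrix_(i, j) ((i == j) (+) ((i == enum_rank u) && ladj G u (enum_val j)))%:R.

Lemma mulQ G u (r : 'rV['F_2]_n) j :
  (r *m Qm G u) 0 j = r 0 j + r 0 (enum_rank u) * (ladj G u (enum_val j))%:R.
Proof.
rewrite mxE.
under eq_bigr => i _ do rewrite mxE -F2_add -F2_mul mulrDr mulrA.
by rewrite big_split /= sum_delta -big_distrl /= sum_delta.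
Qed.

Lemma Qm_unit G u : lsimple G -> Qm G u \in unitmx.
Proof.
case=> _ Hirr.
suff H : Qm G u *m Qm G u = 1%:M by case: (mulmx1_unit H).
apply/row_matrixP => i; rewrite row_mul.
apply/rowP => j; rewrite !mulQ !mxE enum_rankK Hirr andbF addbF F2_mul F2_add.
by congr (_%:R); case: (i == j); case: (i == enum_rank u); case: (ladj G u (enum_val j)).
Qed.

Lemma rv_Q (G G' : lgraph V) u (p : V -> 'I_3 -> 'I_3) :
  (forall k x y, eb G' (p x k) x y = eb G k x y (+) (eb G k x u && ladj G u y)) ->
  forall k x, rv G' (p x k) x = rv G k x *m Qm G u.
Proof.
move=> H k x; apply/rowP => j; rewrite mulQ !mxE H enum_rankK.
by rewrite F2_mul F2_add.
Qed.

Lemma nul_ext G (c1 c2 : V -> 'I_3) : c1 =1 c2 -> nul G c1 = nul G c2.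
Proof.
move=> E; rewrite /nul; congr (_ - _)%N; congr (\rank _).
by apply/matrixP => i j; rewrite !mxE E.
Qed.

Lemma transfer (G G' : lgraph V) (p : V -> 'I_3 -> 'I_3) (Q : 'M['F_2]_n) :
  Q \in unitmx -> (forall k x, rv G' (p x k) x = rv G k x *m Q) ->
  forall c, nul G' (fun x => p x (c x)) = nul G c.
Proof.
move=> HQ H c; rewrite /nul.
have -> : Rm G' (fun x => p x (c x)) = Rm G c *m Q.
  by apply/row_matrixP => i; rewrite row_mul !row_Rm H.
by rewrite mxrankMfree // row_free_unit.
Qed.
End S1.


Section S2.
Variable V : finType.
Local Notation n := #|V|.

Lemma in_vtriple (w : W V) x : reflect (exists k, w = mk k x) (w \in vtriple x).
Proof.
rewrite /vtriple !inE; apply: (iffP idP).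
  by move=> /orP [/orP [/eqP->|/eqP->]|/eqP->]; [exists k0|exists k1|exists k2].
by case=> k ->; case: k => [[|[|[|//]]] Hk]; rewrite /mk /= eqxx ?orbT.
Qed.

Definition mkset (c : V -> 'I_3) : {set W V} := [set mk (c x) x | x : V].

Lemma mkset_triple c v : mkset c :&: vtriple v = [set mk (c v) v].
Proof.
apply/setP => w; rewrite in_setI in_set1; apply/andP/eqP.
  case=> /imsetP [y _ ->] /in_vtriple [k E].
  by have [_ ->] := mk_inj E.
move=> ->; split; first exact: imset_f.
by apply/in_vtriple; exists (c v).
Qed.

Lemma trans_mkset c : Defs.transversal (mkset c).
Proof. by move=> v; rewrite mkset_triple cards1. Qed.

Lemma card_mkset c : #|mkset c| = n.
Proof. by rewrite card_imset // => x y /mk_inj []. Qed.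

Lemma trans_choice (T : {set W V}) : Defs.transversal T -> exists c, T = mkset c.
Proof.
move=> HT.
have Hex : forall x, exists k, mk k x \in T.
  move=> x; have /eqP/cards1P [w Ew] := HT x.
  have : w \in T :&: vtriple x by rewrite Ew set11.
  by rewrite inE => /andP [Hw /in_vtriple [k Ek]]; exists k; rewrite -Ek.
pose c x := odflt k0 [pick k | mk k x \in T].
have Hc : forall x, mk (c x) x \in T.
  move=> x; rewrite /c; case: pickP => [k //|H0].
  by have [k Hk] := Hex x; rewrite H0 in Hk.
exists c; apply/setP => w; apply/idP/imsetP.
  move=> Hw; have [k [x Ew]] := mk_surj w.
  exists x => //; rewrite Ew.
  have /eqP/cards1P [w0 E0] := HT x.
  have h1 : mk k x \in T :&: vtriple x by rewrite inE -Ew Hw; apply/in_vtriple; exists k.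
  have h2 : mk (c x) x \in T :&: vtriple x by rewrite inE Hc; apply/in_vtriple; exists (c x).
  by move: h1 h2; rewrite E0 !inE => /eqP -> /eqP ->.
by case=> x _ ->.
Qed.

Lemma colrank_mk (G : lgraph V) c : colrank (IAS G) (mkset c) = \rank (Rm G c).
Proof.
rewrite /colrank -mxrank_tr.
set f := (fun i : 'I_#|mkset c| => enum_val i).
have -> : (colsub f (IAS G))^T = rowsub f (IAS G)^T by apply/matrixP => i j; rewrite !mxE.
apply: eqmx_rank; apply/andP; split.
  apply/row_subP => i; rewrite row_rowsub.
  have : f i \in mkset c by exact: enum_valP.
  case/imsetP => x _ ->; rewrite row_IAS.
  by have := row_sub (enum_rank x) (Rm G c); rewrite row_Rm enum_rankK.
apply/row_subP => i; rewrite row_Rm.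
set x := enum_val i.
have Hx : mk (c x) x \in mkset c by exact: imset_f.
rewrite -row_IAS -(enum_rankK_in Hx Hx) -row_rowsub.
exact: row_sub.
Qed.

Lemma htn_iff (G : lgraph V) nu : has_transverse_nullity G nu <-> exists c, nul G c = nu.
Proof.
split.
  case=> T [HT <-]; have [c ->] := trans_choice HT.
  by exists c; rewrite /restr_nullity card_mkset colrank_mk.
case=> c <-; exists (mkset c); split; first exact: trans_mkset.
by rewrite /restr_nullity card_mkset colrank_mk.
Qed.
End S2.


Section S3.
Variable V : finType.
Local Notation n := #|V|.

Definition Sc (c : V -> 'I_3) : {set V} := [set x | c x != k0].

Lemma rank_proj (S : {set V}) :
  \rank (\matrix_(i, j) ((i == j) && (enum_val i \notin S))%:R : 'M['F_2]_n)
  = #|~: S|.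
Proof.
set D := \matrix_(i, j) _.
have rowD1 : forall i, enum_val i \notin S -> row i D = row i 1%:M.
  by move=> i Hi; apply/rowP => j; rewrite !mxE Hi andbT.
have rowD0 : forall i, enum_val i \in S -> row i D = 0.
  by move=> i Hi; apply/rowP => j; rewrite !mxE Hi andbF.
pose g := fun i : 'I_#|~: S| => enum_rank (enum_val i).
pose Z := rowsub g (1%:M : 'M['F_2]_n).
have gS : forall i, enum_val (g i) \notin S.
  by move=> i; rewrite /g enum_rankK -in_setC enum_valP.
have ZD : Z *m D = Z.
  apply/row_matrixP => i; rewrite row_mul !row_rowsub -row_mul mul1mx rowD1 //.
have ZZ : Z *m Z^T = 1%:M.
  apply/matrixP => i j; rewrite !mxE.
  under eq_bigr => l _ do rewrite !mxE (eq_sym (g j)).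
  rewrite sum_delta; congr (_%:R).
  by rewrite /g (inj_eq enum_rank_inj) (inj_eq enum_val_inj).
have rZ : \rank Z = #|~: S|.
  apply/anti_leq; rewrite rank_leq_row /=.
  by rewrite -{1}(mxrank1 'F_2 #|~: S|) -ZZ mxrankM_maxl.
apply/anti_leq/andP; split.
  rewrite -rZ; apply: mxrankS; apply/row_subP => i.
  case: (boolP (enum_val i \in S)) => Hi; first by rewrite rowD0 // sub0mx.
  have Hi' : enum_val i \in ~: S by rewrite in_setC.
  rewrite rowD1 // -[i]enum_valK -(enum_rankK_in Hi' Hi').
  have -> : enum_rank (enum_val (enum_rank_in Hi' (enum_val i))) = g (enum_rank_in Hi' (enum_val i)) by [].
  by rewrite -row_rowsub row_sub.
by rewrite -rZ -{1}ZD mxrankM_maxr.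
Qed.

Lemma nul_good (G : lgraph V) c :
  (forall x y, x \in Sc c -> y \in Sc c -> eb G (c x) x y = false) ->
  nul G c = #|Sc c|.
Proof.
move=> Hg; set S := Sc c.
set D := \matrix_(i, j) ((i == j) && (enum_val i \notin S))%:R : 'M['F_2]_n.
have rowRD : forall i, enum_val i \notin S -> row i (Rm G c) = row i D.
  move=> i Hi; apply/rowP => j; rewrite row_Rm !mxE Hi andbT.
  have : c (enum_val i) = k0 by move: Hi; rewrite inE negbK => /eqP.
  move=> ->; rewrite /eb /= -(inj_eq enum_val_inj) eq_sym //.
have eqRD : (Rm G c == D)%MS.
  apply/andP; split; apply/row_subP => i.
    case: (boolP (enum_val i \in S)) => Hi; last by rewrite rowRD // row_sub.
    have -> : row i (Rm G c) = row i (Rm G c) *m D.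
      apply/rowP => j; rewrite [RHS]mxE.
      under eq_bigr => l _ do rewrite [D l j]mxE andbC -F2_mul mulrA.
      rewrite sum_delta !mxE.
      case: (boolP (enum_val j \in S)) => Hj /=; last by rewrite mulr1.
      by rewrite Hg // mulr0.
    exact: submxMl.
  case: (boolP (enum_val i \in S)) => Hi; last by rewrite -rowRD // row_sub.
  have -> : row i D = 0 by apply/rowP => j; rewrite !mxE Hi andbF.
  exact: sub0mx.
rewrite /nul (eqmx_rank eqRD) rank_proj.
by rewrite -(cardsC S) addnK.
Qed.
End S3.


Section S4.
Variable V : finType.
Local Notation n := #|V|.
Implicit Types (G H : lgraph V) (c : V -> 'I_3).

Lemma loc_trans G H K : loc_equiv G H -> loc_equiv H K -> loc_equiv G K.
Proof.
move=> GH; elim=> [//|v K' _ IH|v K' _ IH|v K' _ IH].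
- exact: loc_step_l.
- exact: loc_step_s.
- exact: loc_step_ns.
Qed.

Lemma ls_l u G : lsimple G -> lsimple (loc_l u G).
Proof. by []. Qed.

Lemma ls_s u G : lsimple G -> lsimple (loc_s u G).
Proof.
case=> Hs Hi; split => [x y|x] /=; last by rewrite Hi eqxx.
rewrite Hs eq_sym; congr addb.
by case: (ladj G u x); case: (ladj G u y); rewrite ?andbF ?andbT.
Qed.

Lemma ls_ns u G : lsimple G -> lsimple (loc_ns u G).
Proof.
case=> Hs Hi; split => [x y|x] /=; last by rewrite Hi eqxx.
rewrite Hs eq_sym; congr addb.
by case: (ladj G u x); case: (ladj G u y); rewrite ?andbF ?andbT.
Qed.

Lemma le_ls G H : loc_equiv G H -> lsimple G -> lsimple H.
Proof.
elim=> [//|v K _ IH|v K _ IH|v K _ IH] HG.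
- exact: ls_l (IH HG).
- exact: ls_s (IH HG).
- exact: ls_ns (IH HG).
Qed.

Lemma sw_inv (a b k : 'I_3) : a != b -> sw a b (sw a b k) = k.
Proof.
move=> Hab; rewrite /sw.
case: (eqVneq k a) => [->|Hka]; first by rewrite (eq_sym b a) (negbTE Hab) eqxx.
case: (eqVneq k b) => [->|Hkb]; first by rewrite eqxx.
by rewrite ?(negbTE Hka) ?(negbTE Hkb) ?(negbTE Hka).
Qed.

Lemma nul_l u G c : lsimple G -> nul (loc_l u G) (fun x => pl u x (c x)) = nul G c.
Proof.
move=> Hs; apply: (transfer (Q := 1%:M)); first exact: unitmx1.
by move=> k x; rewrite mulmx1; apply/rowP => j; rewrite !mxE eb_l.
Qed.

Lemma nul_ns u G c : lsimple G -> nul (loc_ns u G) (fun x => pns G u x (c x)) = nul G c.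
Proof.
move=> Hs; apply: (transfer (Qm_unit u Hs)).
by apply: rv_Q => k x y; rewrite eb_ns.
Qed.

Lemma nul_s u G c : lsimple G -> nul (loc_s u G) (fun x => ps G u x (c x)) = nul G c.
Proof.
move=> Hs; apply: (transfer (Qm_unit u Hs)).
by apply: rv_Q => k x y; rewrite eb_s.
Qed.

Lemma pl_inv (u x : V) k : pl u x (pl u x k) = k.
Proof. by rewrite /pl; case: (x == u) => //; rewrite sw_inv. Qed.
Lemma pns_inv G (u x : V) k : pns G u x (pns G u x k) = k.
Proof. by rewrite /pns; case: (x == u); case: (lloop G u); rewrite ?sw_inv. Qed.
Lemma ps_inv G (u x : V) k : ps G u x (ps G u x k) = k.
Proof. by rewrite /ps; case: (x == u); case: (lloop G u); case: (ladj G u x); rewrite ?sw_inv. Qed.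

Lemma le_back G H : loc_equiv G H -> lsimple G ->
  forall c', exists c, nul G c = nul H c'.
Proof.
elim=> [|v K HK IH|v K HK IH|v K HK IH] HG c'; first by exists c'.
- have [c Hc] := IH HG (fun x => pl v x (c' x)).
  exists c; rewrite Hc -(nul_l v _ (le_ls HK HG)); apply: nul_ext => x; exact: pl_inv.
- have [c Hc] := IH HG (fun x => ps K v x (c' x)).
  exists c; rewrite Hc -(nul_s v _ (le_ls HK HG)); apply: nul_ext => x; exact: ps_inv.
- have [c Hc] := IH HG (fun x => pns K v x (c' x)).
  exists c; rewrite Hc -(nul_ns v _ (le_ls HK HG)); apply: nul_ext => x; exact: pns_inv.
Qed.

Lemma eb_off G k x y : k != k0 -> y != x -> eb G k x y = ladj G y x.
Proof.
move=> Hk Hyx; rewrite /eb (negbTE Hyx).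
by case: k Hk => [[|[|[|//]]] Hk'].
Qed.

End S4.


Section S5.
Variable V : finType.
Local Notation n := #|V|.
Implicit Types (G H : lgraph V) (c : V -> 'I_3).

Lemma inSc c x : (x \in Sc c) = (c x != k0).
Proof. by rewrite inE. Qed.

Lemma good_case G c : lsimple G ->
  (forall x y, x \in Sc c -> y \in Sc c -> eb G (c x) x y = false) ->
  exists H, [/\ lsimple H, loc_equiv G H & exists S, stable H S /\ #|S| = nul G c].
Proof.
move=> HG Hg; exists G; split => //; first exact: loc_refl.
exists (Sc c); split; last by rewrite nul_good.
move=> x y Hx Hy; case: (eqVneq x y) => [->|Hxy]; first by case: HG.
by have := Hg y x Hy Hx; rewrite eb_off // -?inSc // eq_sym.
Qed.

Lemma stepA G c x : lsimple G -> x \in Sc c -> eb G (c x) x x ->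
  exists G' c', [/\ lsimple G', loc_equiv G G', nul G' c' = nul G c &
                   (#|Sc c'| < #|Sc c|)%N].
Proof.
move=> HG Hx He.
exists (loc_ns x G), (fun z => pns G x z (c z)); split.
- exact: ls_ns.
- exact: loc_step_ns (loc_refl G).
- exact: nul_ns.
have Hx' : x \notin Sc (fun z => pns G x z (c z)).
  move: Hx He; rewrite !inSc /pns eqxx /eb.
  case: (c x) => [[|[|[|//]]] Hk] //= _; rewrite eqxx;
  by case: (lloop G x) => //= _; rewrite /sw /k0 /k1 /k2.
have Hsub : Sc (fun z => pns G x z (c z)) \subset Sc c :\ x.
  apply/subsetP => z Hz; rewrite in_setD1.
  case: (eqVneq z x) => [Ezx|Hzx]; first by rewrite Ezx in Hz; rewrite Hz in Hx'.
  by move: Hz; rewrite !inSc /pns (negbTE Hzx).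
rewrite (cardsD1 x (Sc c)) Hx add1n ltnS.
exact: subset_leq_card.
Qed.

Lemma stepB G c x y : lsimple G -> x \in Sc c -> y \in Sc c -> y != x ->
  ~~ eb G (c y) y y -> ladj G y x ->
  exists G' c', [/\ lsimple G', loc_equiv G G', nul G' c' = nul G c &
                   (#|Sc c'| < #|Sc c|)%N].
Proof.
move=> HG Hx Hy Hyx Hn Ha.
set c1 := fun z => pns G x z (c z).
have Hc1y : c1 y = c y by rewrite /c1 /pns (negbTE Hyx).
have HG1 := ls_ns x HG.
have Hy1 : y \in Sc c1 by rewrite inSc Hc1y -inSc.
have He1 : eb (loc_ns x G) (c1 y) y y.
  rewrite /c1 eb_ns // (negbTE Hn) addFb eb_off; last by rewrite eq_sym.
    by case: HG => Hs _; rewrite andbb Hs Ha.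
  by rewrite -inSc.
have [G2 [c2 [HG2 Hle2 Hn2 Hlt2]]] := stepA HG1 Hy1 He1.
exists G2, c2; split => //.
- exact: loc_trans (loc_step_ns x (loc_refl G)) Hle2.
- by rewrite Hn2 nul_ns.
apply: (leq_trans Hlt2); apply: subset_leq_card; apply/subsetP => z.
rewrite !inSc /c1 /pns; case: (eqVneq z x) => [->|//]; by rewrite -inSc Hx.
Qed.

Lemma reduce m : forall G c, lsimple G -> (#|Sc c| <= m)%N ->
  exists H, [/\ lsimple H, loc_equiv G H & exists S, stable H S /\ #|S| = nul G c].
Proof.
elim: m => [|m IH] G c HG Hm.
  apply: good_case => // x y Hx.
  by move: Hm Hx; rewrite leqn0 => /eqP/cards0_eq ->; rewrite inE.
have finish : forall G' c', lsimple G' -> loc_equiv G G' -> nul G' c' = nul G c ->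
    (#|Sc c'| < #|Sc c|)%N ->
    exists H, [/\ lsimple H, loc_equiv G H & exists S, stable H S /\ #|S| = nul G c].
  move=> G' c' HG' Hle Hnul Hlt.
  have [H [HH HGH HS]] := IH G' c' HG' (leq_trans Hlt Hm).
  by exists H; split => //; [exact: loc_trans Hle HGH | rewrite -Hnul].
case: (pickP (fun x => (x \in Sc c) && eb G (c x) x x)) => [x /andP [Hx He] | Hnd].
  have [G' [c' [h1 h2 h3 h4]]] := stepA HG Hx He; exact: finish h1 h2 h3 h4.
case: (pickP (fun p : V * V => [&& p.1 \in Sc c, p.2 \in Sc c & eb G (c p.1) p.1 p.2]))
   => [[x y] /and3P [/= Hx Hy He] | Hnone].
  have Hyx : y != x.
    by apply/eqP => Eyx; move: He; rewrite Eyx => He; move: (Hnd x); rewrite Hx He.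
  have Hn : ~~ eb G (c y) y y by move: (Hnd y); rewrite Hy /= => ->.
  have Ha : ladj G y x by rewrite -(@eb_off _ G (c x)) // -inSc.
  have [G' [c' [h1 h2 h3 h4]]] := stepB HG Hx Hy Hyx Hn Ha; exact: finish h1 h2 h3 h4.
apply: good_case => // x y Hx Hy.
by move: (Hnone (x, y)); rewrite /= Hx Hy => /negbT; rewrite /= => /negbTE.
Qed.

End S5.

Theorem corollary1p3 (V : finType) (G : lgraph V) (nu : nat) :
  lsimple G -> (0 < nu)%N ->
  (has_transverse_nullity G nu <->
   exists H : lgraph V,
     [/\ lsimple H, loc_equiv G H &
         exists S : {set V}, stable H S /\ #|S| = nu]).
Proof.
move=> HG _; split.
  case/htn_iff => c <-; exact: (@reduce _ #|Sc c| G c HG (leqnn _)).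
case=> H [HH HGH [S [HS <-]]].
apply/htn_iff.
pose cS := fun x => if x \in S then (if lloop H x then k2 else k1) else k0.
have ScS : Sc cS = S.
  apply/setP => x; rewrite inSc /cS.
  by case: (x \in S); first case: (lloop H x).
have HnS : nul H cS = #|S|.
  rewrite -ScS; apply: nul_good.
  move=> x y Hx Hy; rewrite ScS in Hx Hy.
  case: (eqVneq y x) => [->|Hyx].
    by rewrite /cS Hx /eb; case: (lloop H x); rewrite /= ?eqxx.
  rewrite eb_off //; first exact: HS.
  by rewrite /cS Hx; case: (lloop H x).
have [c Hc] := le_back HGH HG cS.
by exists c; rewrite Hc.
Qed.
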